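(* Let $I_\cap^2$ be as defined in the context. Then, for all jointly distributed finite-valued random variables: (GP) $I_\cap^2(\{X_1,X_2\};Y)\geq 0$; (S) $I_\cap^2(\{X_1,X_2\};Y)=I_\cap^2(\{X_2,X_1\};Y)$; (I) $I_\cap^2(\{X_1\};Y)=I(X_1;Y)$; (M) $I_\cap^2(\{X_1,X_2\};Y)\leq I_\cap^2(\{X_1\};Y)$, with equality if $H(X_1|X_2)=0$; (SM) $I_\cap^2(\{X_1,X_2\};Y)\leq I_\cap^2(\{X_1\};Y)$, with equality if $I(X_1X_2;Y)=I(X_2;Y)$. However, $I_\cap^2$ does not satisfy (LP) and (Id): (LP) there exist finite-valued $(X_1,X_2,Y)$ for which the derived synergy $SI^2(\{X_1X_2\};Y):=I(X_1X_2;Y)-I(X_1;Y)-I(X_2;Y)+I_\cap^2(\{X_1,X_2\};Y)$ is negative (so the derived decomposition is not nonnegative); (Id) there exist finite-valued $(X_1,X_2)$ such that $I_\cap^2(\{X_1,X_2\};(X_1,X_2))\neq I(X_1;X_2)$.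
   Context: For finite-valued random variables, $A-B-C$ means that $A$ and $C$ are conditionally independent given $B$. For jointly distributed finite random variables $(X_1,X_2,Y)$ define $$I_\cap^2(\{X_1,X_2\};Y)=\sup_{Q}\, I(Q;Y),$$ over all finite-valued random variables $Q$ jointly distributed with $(X_1,X_2,Y)$ (marginal of $(X_1,X_2,Y)$ fixed) such that $Q-X_1-Y$ and $Q-X_2-Y$ are Markov chains; for a single predictor, $I_\cap^2(\{X_1\};Y)=\sup_Q I(Q;Y)$ over all such $Q$ with $Q-X_1-Y$. $X_1X_2$ denotes the joint random variable $(X_1,X_2)$; $H$ and $I$ denote Shannon entropy and (conditional) mutual information. *)

(* Defs.v *)
From HB Require Import structures.
From mathcomp Require Import all_boot all_order all_algebra.
From mathcomp Require Import classical_sets boolp reals exp.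
Set Implicit Arguments. Unset Strict Implicit. Unset Printing Implicit Defensive.
Import Order.TTheory GRing.Theory Num.Theory.
Local Open Scope ring_scope.
Local Open Scope classical_set_scope.

Definition is_pmf (R : realType) (T : finType) (p : {ffun T -> R}) : Prop :=
  (forall x, 0 <= p x) /\ \sum_(x : T) p x = 1.

Definition marg (R : realType) (T U : finType) (f : T -> U) (p : {ffun T -> R})
  : {ffun U -> R} := [ffun u => \sum_(x : T | f x == u) p x].

Definition entropy (R : realType) (T : finType) (p : {ffun T -> R}) : R :=
  - \sum_(x : T) p x * ln (p x).

Definition Hrv (R : realType) (T U : finType) (f : T -> U) (p : {ffun T -> R}) : R :=
  entropy (marg f p).

Definition condH (R : realType) (T U V : finType) (f : T -> U) (g : T -> V)
  (p : {ffun T -> R}) : R :=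
  Hrv (fun x => (f x, g x)) p - Hrv g p.

Definition MI (R : realType) (T U V : finType) (f : T -> U) (g : T -> V)
  (p : {ffun T -> R}) : R :=
  Hrv f p + Hrv g p - Hrv (fun x => (f x, g x)) p.

(* Markov chain f - g - h : f and h conditionally independent given g,
   i.e. P(f=a,g=b,h=c) P(g=b) = P(f=a,g=b) P(g=b,h=c) for all a b c. *)
Definition markov (R : realType) (T A B C : finType) (f : T -> A) (g : T -> B)
  (h : T -> C) (p : {ffun T -> R}) : Prop :=
  forall a b c,
    marg (fun x => (f x, g x, h x)) p (a, b, c) * marg g p b
    = marg (fun x => (f x, g x)) p (a, b) * marg (fun x => (g x, h x)) p (b, c).

(* I_cap^2({X1,X2};Y) for a joint law p of (X1,X2,Y): sup of I(Q;Y) over all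
   finite-valued Q coupled with (X1,X2,Y) (marginal p fixed) such that
   Q - X1 - Y and Q - X2 - Y. *)
Definition Icap2_set (R : realType) (T1 T2 TY : finType)
  (p : {ffun T1 * T2 * TY -> R}) : set R :=
  [set v | exists (TQ : finType) (q : {ffun TQ * (T1 * T2 * TY) -> R}),
     [/\ is_pmf q, marg snd q = p,
         markov fst (fun w => w.2.1.1) (fun w => w.2.2) q,
         markov fst (fun w => w.2.1.2) (fun w => w.2.2) q &
         v = MI fst (fun w => w.2.2) q]].

Definition Icap2 (R : realType) (T1 T2 TY : finType)
  (p : {ffun T1 * T2 * TY -> R}) : R := sup (Icap2_set p).

(* I_cap^2({X1};Y) for a joint law p of (X1,Y). *)
Definition Icap1_set (R : realType) (T1 TY : finType)
  (p : {ffun T1 * TY -> R}) : set R :=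
  [set v | exists (TQ : finType) (q : {ffun TQ * (T1 * TY) -> R}),
     [/\ is_pmf q, marg snd q = p,
         markov fst (fun w => w.2.1) (fun w => w.2.2) q &
         v = MI fst (fun w => w.2.2) q]].

Definition Icap1 (R : realType) (T1 TY : finType)
  (p : {ffun T1 * TY -> R}) : R := sup (Icap1_set p).

Definition rX1 (T1 T2 TY : Type) (w : T1 * T2 * TY) : T1 := w.1.1.
Definition rX2 (T1 T2 TY : Type) (w : T1 * T2 * TY) : T2 := w.1.2.
Definition rY (T1 T2 TY : Type) (w : T1 * T2 * TY) : TY := w.2.
Definition rX12 (T1 T2 TY : Type) (w : T1 * T2 * TY) : T1 * T2 := w.1.

Definition swap12 (R : realType) (T1 T2 TY : finType) (p : {ffun T1 * T2 * TY -> R})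
  : {ffun T2 * T1 * TY -> R} := marg (fun w => (w.1.2, w.1.1, w.2)) p.
Definition law1Y (R : realType) (T1 T2 TY : finType) (p : {ffun T1 * T2 * TY -> R})
  : {ffun T1 * TY -> R} := marg (fun w => (w.1.1, w.2)) p.

Definition SI2 (R : realType) (T1 T2 TY : finType) (p : {ffun T1 * T2 * TY -> R}) : R :=
  MI (@rX12 T1 T2 TY) (@rY T1 T2 TY) p - MI (@rX1 T1 T2 TY) (@rY T1 T2 TY) p
  - MI (@rX2 T1 T2 TY) (@rY T1 T2 TY) p + Icap2 p.

Definition copyY (R : realType) (T1 T2 : finType) (p : {ffun T1 * T2 -> R})
  : {ffun T1 * T2 * (T1 * T2) -> R} := marg (fun w => (w.1, w.2, w)) p.

(* Main.v *)
Require Import Defs.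
From HB Require Import structures.
From mathcomp Require Import all_boot all_order all_algebra.
From mathcomp Require Import classical_sets boolp reals exp.
From mathcomp Require Import ring lra.
Import Order.TTheory GRing.Theory Num.Theory.
Local Open Scope ring_scope.
Local Open Scope classical_set_scope.
Set Implicit Arguments. Unset Strict Implicit. Unset Printing Implicit Defensive.

Lemma sum_marg (R : realType) (T U : finType) (f : T -> U) (p : {ffun T -> R}) (F : U -> R) :
  \sum_u marg f p u * F u = \sum_x p x * F (f x).
Proof.
rewrite [RHS](partition_big f xpredT) //=; apply: eq_bigr => u _.
rewrite ffunE big_distrl /=; apply: eq_bigr => x /eqP <-. done.
Qed.

Lemma sum_ind (R : realType) (T : finType) (P : pred T) (p : T -> R) :
  \sum_(x | P x) p x = \sum_x p x * (P x)%:R.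
Proof.
rewrite big_mkcond; apply: eq_bigr => x _; case: (P x) => /=.
  by rewrite mulr1.
by rewrite mulr0.
Qed.

Lemma marg_comp (R : realType) (T U V : finType) (f : T -> U) (g : U -> V) (p : {ffun T -> R}) :
  marg g (marg f p) = marg (fun x => g (f x)) p.
Proof.
apply/ffunP => w; rewrite [LHS]ffunE [RHS]ffunE.
rewrite (sum_ind (fun u => g u == w)) (sum_ind (fun x => g (f x) == w)).
by rewrite (sum_marg f p (fun u => (g u == w)%:R)).
Qed.

Lemma marg_id (R : realType) (T : finType) (p : {ffun T -> R}) :
  marg (fun x => x) p = p.
Proof. by apply/ffunP => w; rewrite ffunE big_pred1_eq. Qed.

Lemma marg_pmf (R : realType) (T U : finType) (f : T -> U) (p : {ffun T -> R}) :
  is_pmf p -> is_pmf (marg f p).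
Proof.
move=> [p0 p1]; split.
  by move=> u; rewrite ffunE; apply: sumr_ge0 => x _.
transitivity (\sum_u marg f p u * 1); first by apply: eq_bigr => u _; rewrite mulr1.
rewrite sum_marg -[RHS]p1; apply: eq_bigr => x _ /=; by rewrite mulr1.
Qed.

Lemma Hrv_sample (R : realType) (T U : finType) (f : T -> U) (p : {ffun T -> R}) :
  Hrv f p = - \sum_x p x * ln (marg f p (f x)).
Proof. by rewrite /Hrv /entropy (sum_marg f p (fun u => ln (marg f p u))). Qed.

Lemma marg_mono (R : realType) (T U V : finType) (f : T -> U) (g : T -> V) (p : {ffun T -> R}) u v :
  (forall x, 0 <= p x) -> (forall y, g y = v -> f y = u) -> marg g p v <= marg f p u.
Proof.
move=> p0 H; rewrite !ffunE (sum_ind (fun y => g y == v)) (sum_ind (fun y => f y == u)).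
apply: ler_sum => y _.
case E: (g y == v); last by rewrite mulr0 mulr_ge0.
by rewrite (H y (eqP E)) eqxx.
Qed.

Lemma marg_ge (R : realType) (T U : finType) (f : T -> U) (p : {ffun T -> R}) x :
  (forall x, 0 <= p x) -> p x <= marg f p (f x).
Proof.
move=> p0; rewrite ffunE (bigD1 x) //= lerDl; apply: sumr_ge0 => *; exact: p0.
Qed.

Lemma Hrv_eq (R : realType) (T U V : finType) (f : T -> U) (g : T -> V) (p : {ffun T -> R}) :
  (forall x y, f x = f y <-> g x = g y) -> Hrv f p = Hrv g p.
Proof.
move=> H; rewrite !Hrv_sample; congr (- _); apply: eq_bigr => x _; congr (_ * ln _).
rewrite !ffunE; apply: eq_bigl => y; apply/eqP/eqP => /H //.
Qed.

Lemma Hrv_mono (R : realType) (T U V : finType) (f : T -> U) (g : T -> V) (p : {ffun T -> R}) :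
  (forall x, 0 <= p x) -> (forall x y, g x = g y -> f x = f y) -> Hrv f p <= Hrv g p.
Proof.
move=> p0 H; rewrite !Hrv_sample lerN2; apply: ler_sum => x _.
have [px0|px0] := eqVneq (p x) 0; first by rewrite px0 !mul0r.
have pxp : 0 < p x by rewrite lt_def px0 p0.
apply: ler_wpM2l => //.
have h1 : 0 < marg g p (g x) := lt_le_trans pxp (@marg_ge _ _ _ g p x p0).
have h2 : marg g p (g x) <= marg f p (f x).
  by apply: marg_mono => // y /H.
rewrite ler_ln ?posrE //; exact: lt_le_trans h1 h2.
Qed.

Lemma Hrv_comp (R : realType) (T U V : finType) (k : T -> U) (f : U -> V) (p : {ffun T -> R}) :
  Hrv f (marg k p) = Hrv (fun x => f (k x)) p.
Proof. by rewrite /Hrv marg_comp. Qed.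

Lemma MI_comp (R : realType) (T U A B : finType) (k : T -> U) (f : U -> A) (g : U -> B) (p : {ffun T -> R}) :
  MI f g (marg k p) = MI (fun x => f (k x)) (fun x => g (k x)) p.
Proof. by rewrite /MI !Hrv_comp. Qed.

Lemma markov_comp (R : realType) (T U A B C : finType) (k : T -> U) (f : U -> A) (g : U -> B)
  (h : U -> C) (p : {ffun T -> R}) :
  markov f g h (marg k p) <-> markov (fun x => f (k x)) (fun x => g (k x)) (fun x => h (k x)) p.
Proof. by rewrite /markov !marg_comp. Qed.



Lemma ln_le_sub1 (R : realType) (x : R) : 0 < x -> ln x <= x - 1.
Proof.
move=> x0; have := @le_ln1Dx R (x - 1); rewrite addrCA subrr addr0; apply; lra.
Qed.

Lemma ln_lt_sub1 (R : realType) (x : R) : 0 < x -> x != 1 -> ln x < x - 1.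
Proof.
move=> x0 x1; rewrite -ltr_expR lnK ?posrE //.
have := @expR_gt1Dx R (x - 1); rewrite addrCA subrr addr0; apply; by rewrite subr_eq0.
Qed.

Lemma gibbs_term (R : realType) (a b : R) : 0 <= a -> 0 <= b -> (0 < a -> 0 < b) ->
  a * ln (b / a) <= b - a.
Proof.
move=> a0 b0 ab; have [->|an0] := eqVneq a 0; first by rewrite mul0r subr0.
have ap : 0 < a by rewrite lt_def an0 a0.
have bp := ab ap.
have := ln_le_sub1 (divr_gt0 bp ap) => H.
have := ler_wpM2l (ltW ap) H; rewrite mulrBr mulr1 mulrCA divff // mulr1 => H1; exact: H1.
Qed.

Lemma gibbs_eq (R : realType) (a b : R) : 0 <= a -> 0 <= b -> (0 < a -> 0 < b) ->
  a * ln (b / a) = b - a -> b = a.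
Proof.
move=> a0 b0 ab; have [->|an0] := eqVneq a 0; first by rewrite mul0r subr0 => <-.
have ap : 0 < a by rewrite lt_def an0 a0.
have bp := ab ap.
have [e|ne] := eqVneq (b / a) 1.
  by move=> _; exact: divr1_eq e.
have := ln_lt_sub1 (divr_gt0 bp ap) ne => H.
have := ltr_pM2l ap; move=> /(_ (ln (b/a)) (b / a - 1)); rewrite H.
rewrite mulrBr mulr1 mulrCA divff // mulr1 => /esym H2 H3.
by move: H2; rewrite H3 ltxx.
Qed.


Definition Qf (R : realType) (T A B C : finType) (f : T -> A) (g : T -> B) (h : T -> C)
  (p : {ffun T -> R}) (u : A * B * C) : R :=
  marg (fun x => (f x, g x)) p (u.1.1, u.1.2) * marg (fun x => (g x, h x)) p (u.1.2, u.2)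
  / marg g p u.1.2.

Definition CMI (R : realType) (T A B C : finType) (f : T -> A) (g : T -> B) (h : T -> C)
  (p : {ffun T -> R}) : R :=
  Hrv (fun x => (f x, g x)) p + Hrv (fun x => (g x, h x)) p - Hrv g p
  - Hrv (fun x => (f x, g x, h x)) p.

Lemma ln4 (R : realType) (a b c d : R) : 0 < a -> 0 < b -> 0 < c -> 0 < d ->
  ln (a * b / c / d) = ln a + ln b - ln c - ln d.
Proof.
move=> a0 b0 c0 d0.
rewrite ln_div ?posrE ?divr_gt0 ?mulr_gt0 // ln_div ?posrE ?mulr_gt0 // lnM ?posrE //.
Qed.

Lemma marg_sum2 (R : realType) (T B C : finType) (g : T -> B) (h : T -> C)
  (p : {ffun T -> R}) b :
  \sum_c marg (fun x => (g x, h x)) p (b, c) = marg g p b.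
Proof.
transitivity (\sum_c \sum_x p x * ((g x == b) && (h x == c))%:R).
  apply: eq_bigr => c _; rewrite ffunE (sum_ind (fun x => (g x, h x) == (b, c))).
  by apply: eq_bigr => x _; rewrite xpair_eqE.
rewrite exchange_big ffunE (sum_ind (fun x => g x == b)); apply: eq_bigr => x _ /=.
rewrite -big_distrr /=; congr (_ * _).
rewrite (bigD1 (h x)) //= eqxx andbT big1 ?addr0 // => c hc.
by rewrite [h x == c]eq_sym (negbTE hc) andbF.
Qed.

Lemma marg_pos (R : realType) (T U : finType) (f : T -> U) (p : {ffun T -> R}) x :
  (forall x, 0 <= p x) -> 0 < p x -> 0 < marg f p (f x).
Proof. by move=> p0 px; apply: lt_le_trans px (marg_ge f x p0). Qed.

Lemma cmi_atom (R : realType) (T A B C : finType) (f : T -> A) (g : T -> B) (h : T -> C)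
  (p : {ffun T -> R}) : (forall x, 0 <= p x) ->
  CMI f g h p = - \sum_u marg (fun x => (f x, g x, h x)) p u *
     ln (Qf f g h p u / marg (fun x => (f x, g x, h x)) p u).
Proof.
move=> p0.
rewrite (sum_marg (fun x => (f x, g x, h x)) p
   (fun u => ln (Qf f g h p u / marg (fun x => (f x, g x, h x)) p u))) /=.
rewrite /CMI !Hrv_sample.
rewrite [in RHS](eq_bigr (fun x => p x * ln (marg (fun x => (f x, g x)) p (f x, g x))
   + p x * ln (marg (fun x => (g x, h x)) p (g x, h x)) - p x * ln (marg g p (g x))
   - p x * ln (marg (fun x => (f x, g x, h x)) p (f x, g x, h x)))).
  rewrite !sumrB big_split /=; ring.
move=> x _.
have [px0|px0] := eqVneq (p x) 0; first by rewrite px0 !mul0r !subr0 addr0.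
have px : 0 < p x by rewrite lt_def px0 p0.
rewrite /Qf /= ln4; last 4 first.
- exact: (marg_pos (fun x => (f x, g x)) p0 px).
- exact: (marg_pos (fun x => (g x, h x)) p0 px).
- exact: (marg_pos g p0 px).
- exact: (marg_pos (fun x => (f x, g x, h x)) p0 px).
ring.
Qed.

Lemma Qf_ge0 (R : realType) (T A B C : finType) (f : T -> A) (g : T -> B) (h : T -> C)
  (p : {ffun T -> R}) u : (forall x, 0 <= p x) -> 0 <= Qf f g h p u.
Proof.
move=> p0; rewrite /Qf; apply: divr_ge0; first apply: mulr_ge0;
  rewrite ffunE; apply: sumr_ge0 => *; exact: p0.
Qed.

Lemma Qf_pos (R : realType) (T A B C : finType) (f : T -> A) (g : T -> B) (h : T -> C)
  (p : {ffun T -> R}) u : (forall x, 0 <= p x) ->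
  0 < marg (fun x => (f x, g x, h x)) p u -> 0 < Qf f g h p u.
Proof.
case: u => [[a b] c] p0 pu; rewrite /Qf /=.
apply: divr_gt0; first apply: mulr_gt0.
- apply: lt_le_trans pu _; apply: marg_mono => // y [-> -> _].
  by [].
- apply: lt_le_trans pu _; apply: marg_mono => // y [_ -> ->].
  by [].
- apply: lt_le_trans pu _; apply: marg_mono => // y [_ -> _].
  by [].
Qed.

Lemma sumQ_le1 (R : realType) (T A B C : finType) (f : T -> A) (g : T -> B) (h : T -> C)
  (p : {ffun T -> R}) : is_pmf p -> \sum_u Qf f g h p u <= 1.
Proof.
move=> pp; have [p0 _] := pp.
have [_ s1] := marg_pmf (fun x => (f x, g x)) pp.
have -> : \sum_u Qf f g h p u = \sum_(ab : A * B) \sum_(c : C) Qf f g h p (ab, c).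
  by rewrite pair_bigA; apply: eq_bigr => [[ab c]] _.
rewrite -[X in _ <= X]s1; apply: ler_sum => [[a b]] _.
rewrite /Qf /=.
under eq_bigr do rewrite mulrAC.
rewrite -big_distrr /= marg_sum2.
have [e|ne] := eqVneq (marg g p b) 0.
  rewrite e mulr0; rewrite ffunE; apply: sumr_ge0 => *; exact: p0.
by rewrite divfK.
Qed.



Lemma CMI_ge0 (R : realType) (T A B C : finType) (f : T -> A) (g : T -> B) (h : T -> C)
  (p : {ffun T -> R}) : is_pmf p -> 0 <= CMI f g h p.
Proof.
move=> pp; have [p0 _] := pp.
have [q0 s3] := marg_pmf (fun x => (f x, g x, h x)) pp.
rewrite cmi_atom // oppr_ge0.
apply: (@le_trans _ _ (\sum_u (Qf f g h p u - marg (fun x => (f x, g x, h x)) p u))).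
  apply: ler_sum => u _; apply: gibbs_term => //; first exact: Qf_ge0.
  exact: Qf_pos.
rewrite sumrB s3 subr_le0; exact: sumQ_le1.
Qed.

Lemma CMI_eq0_markov (R : realType) (T A B C : finType) (f : T -> A) (g : T -> B) (h : T -> C)
  (p : {ffun T -> R}) : is_pmf p -> CMI f g h p = 0 -> markov f g h p.
Proof.
move=> pp H0; have [p0 _] := pp.
have [q0 s3] := marg_pmf (fun x => (f x, g x, h x)) pp.
have sQ := sumQ_le1 f g h pp.
move: H0; rewrite cmi_atom // => /eqP; rewrite oppr_eq0 => /eqP H0.
set P3 := marg (fun x => (f x, g x, h x)) p in q0 s3 H0 *.
have D : forall u, 0 <= Qf f g h p u - P3 u - P3 u * ln (Qf f g h p u / P3 u).
  move=> u; rewrite subr_ge0; apply: gibbs_term => //; first exact: Qf_ge0.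
  exact: Qf_pos.
have S : \sum_u (Qf f g h p u - P3 u - P3 u * ln (Qf f g h p u / P3 u)) = 0.
  apply/eqP; rewrite eq_le sumr_ge0 ?andbT; last by move=> u _; exact: D.
  by rewrite !sumrB s3 H0; lra.
have hq : forall u, Qf f g h p u = P3 u.
  move=> u; have := @psumr_eq0P _ _ _ _ (fun u _ => D u) S u isT => /eqP.
  rewrite subr_eq0 => /eqP /esym E.
  apply: gibbs_eq => //; first exact: Qf_ge0.
  exact: Qf_pos.
move=> a b c; rewrite -/P3.
have [e|ne] := eqVneq (marg g p b) 0.
  have e2 : marg (fun x => (f x, g x)) p (a, b) = 0.
    apply/eqP; rewrite eq_le; apply/andP; split.
      by rewrite -e; apply: marg_mono => // y [].
    rewrite ffunE; apply: sumr_ge0 => *; exact: p0.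
  by rewrite e e2 !mul0r mulr0.
by rewrite -(hq (a, b, c)) /Qf /= divfK.
Qed.

Lemma markov_CMI0 (R : realType) (T A B C : finType) (f : T -> A) (g : T -> B) (h : T -> C)
  (p : {ffun T -> R}) : is_pmf p -> markov f g h p -> CMI f g h p = 0.
Proof.
move=> pp M; have [p0 _] := pp.
have [q0 s3] := marg_pmf (fun x => (f x, g x, h x)) pp.
rewrite cmi_atom // big1 ?oppr0 // => [[[a b] c]] _.
have [e|ne] := eqVneq (marg (fun x => (f x, g x, h x)) p (a, b, c)) 0.
  by rewrite e mul0r.
have pg : marg g p b != 0.
  apply: contra ne => /eqP e; rewrite eq_le q0 andbT -e.
  by apply: marg_mono => // y [].
by rewrite /Qf /= -M mulfK // divff // ln1 mulr0.
Qed.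

Lemma DPI (R : realType) (T A B C : finType) (f : T -> A) (g : T -> B) (h : T -> C)
  (p : {ffun T -> R}) : is_pmf p -> markov f g h p -> MI f h p <= MI g h p.
Proof.
move=> pp M; have h1 := markov_CMI0 pp M; have h2 := CMI_ge0 g f h pp.
move: h1 h2; rewrite /CMI /MI.
rewrite (@Hrv_eq _ _ _ _ (fun x => (g x, f x)) (fun x => (f x, g x))); last first.
  by move=> x y; split => -[-> ->].
rewrite (@Hrv_eq _ _ _ _ (fun x => (g x, f x, h x)) (fun x => (f x, g x, h x))); last first.
  by move=> x y; split => -[-> -> ->].
lra.
Qed.


Lemma markov_fun (R : realType) (T A B C : finType) (f : T -> A) (g : T -> B) (h : T -> C)
  (p : {ffun T -> R}) (phi : B -> A) : (forall x, f x = phi (g x)) -> markov f g h p.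
Proof.
move=> Hf a b c.
have E3 : marg (fun x => (f x, g x, h x)) p (a, b, c) =
          if a == phi b then marg (fun x => (g x, h x)) p (b, c) else 0.
  rewrite !ffunE; case: eqP => [->|ne].
    apply: eq_bigl => x; rewrite Hf !xpair_eqE.
    by case: (eqVneq (g x) b) => [->|]; rewrite ?eqxx ?andbF.
  rewrite big_pred0 // => x; rewrite Hf !xpair_eqE.
  apply/negP => /andP[/andP[/eqP e1 /eqP e2] _]; apply: ne; by rewrite -e1 e2.
have E2 : marg (fun x => (f x, g x)) p (a, b) =
          if a == phi b then marg g p b else 0.
  rewrite !ffunE; case: eqP => [->|ne].
    apply: eq_bigl => x; rewrite Hf !xpair_eqE.
    by case: (eqVneq (g x) b) => [->|]; rewrite ?eqxx ?andbF.
  rewrite big_pred0 // => x; rewrite Hf !xpair_eqE.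
  apply/negP => /andP[/eqP e1 /eqP e2]; apply: ne; by rewrite -e1 e2.
by rewrite E3 E2; case: ifP => _; rewrite ?mul0r // mulrC.
Qed.

Lemma sup_max (R : realType) (E : set R) m : E m -> (forall v, E v -> v <= m) -> sup E = m.
Proof.
move=> Em ub; apply/eqP; rewrite eq_le; apply/andP; split.
  by apply: ge_sup; [exists m | move=> v /ub].
have hs : has_sup E by split; [exists m | exists m => v /ub].
exact: (sup_upper_bound hs).
Qed.

Lemma Icap1_ub (R : realType) (T1 TY : finType) (p : {ffun T1 * TY -> R}) v :
  Icap1_set p v -> v <= MI fst snd p.
Proof.
move=> [TQ [q [qp mq M ->]]]; rewrite -mq MI_comp; exact: DPI qp M.
Qed.

Lemma Icap1_mem (R : realType) (T1 TY : finType) (p : {ffun T1 * TY -> R}) :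
  is_pmf p -> Icap1_set p (MI fst snd p).
Proof.
move=> pp; exists T1, (marg (fun w => (w.1, w)) p); split.
- exact: marg_pmf.
- by rewrite marg_comp marg_id.
- by apply/markov_comp; apply: (@markov_fun _ _ _ _ _ _ _ _ _ id).
- by rewrite MI_comp.
Qed.

Lemma Icap1E (R : realType) (T1 TY : finType) (p : {ffun T1 * TY -> R}) :
  is_pmf p -> Icap1 p = MI fst snd p.
Proof.
move=> pp; apply: sup_max; [exact: Icap1_mem | exact: Icap1_ub].
Qed.



Lemma Hrv_unit (R : realType) (T : finType) (p : {ffun T -> R}) :
  is_pmf p -> Hrv (fun _ => tt) p = 0.
Proof.
move=> [p0 p1]; rewrite Hrv_sample big1 ?oppr0 // => x _.
have -> : marg (fun _ : T => tt) p tt = 1.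
  by rewrite ffunE -p1; apply: eq_bigl.
by rewrite ln1 mulr0.
Qed.

Lemma Icap2_ub (R : realType) (T1 T2 TY : finType) (p : {ffun T1 * T2 * TY -> R}) v :
  Icap2_set p v -> v <= MI (@rX1 T1 T2 TY) (@rY T1 T2 TY) p.
Proof.
move=> [TQ [q [qp mq M1 M2 ->]]]; rewrite -mq MI_comp; exact: DPI qp M1.
Qed.

Lemma Icap2_0 (R : realType) (T1 T2 TY : finType) (p : {ffun T1 * T2 * TY -> R}) :
  is_pmf p -> Icap2_set p 0.
Proof.
move=> pp; exists unit, (marg (fun w => (tt, w)) p); split.
- exact: marg_pmf.
- by rewrite marg_comp marg_id.
- by apply/markov_comp; apply: (@markov_fun _ _ _ _ _ _ _ _ _ (fun _ => tt)).
- by apply/markov_comp; apply: (@markov_fun _ _ _ _ _ _ _ _ _ (fun _ => tt)).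
- rewrite MI_comp /MI /= Hrv_unit // add0r.
  rewrite (@Hrv_eq _ _ _ _ (fun x => (tt, x.2)) (fun x => x.2)); first by rewrite subrr.
  by move=> x y; split => [[->]|->].
Qed.

Lemma Icap2_hassup (R : realType) (T1 T2 TY : finType) (p : {ffun T1 * T2 * TY -> R}) :
  is_pmf p -> has_sup (Icap2_set p).
Proof.
move=> pp; split; first by exists 0; exact: Icap2_0.
by exists (MI (@rX1 T1 T2 TY) (@rY T1 T2 TY) p) => v /Icap2_ub.
Qed.

Lemma Icap2_ge (R : realType) (T1 T2 TY : finType) (p : {ffun T1 * T2 * TY -> R}) v :
  is_pmf p -> Icap2_set p v -> v <= Icap2 p.
Proof. by move=> pp hv; exact: (sup_upper_bound (Icap2_hassup pp)). Qed.

Lemma Icap2_le (R : realType) (T1 T2 TY : finType) (p : {ffun T1 * T2 * TY -> R}) :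
  is_pmf p -> Icap2 p <= MI (@rX1 T1 T2 TY) (@rY T1 T2 TY) p.
Proof.
move=> pp; apply: ge_sup; first by exists 0; exact: Icap2_0.
by move=> v /Icap2_ub.
Qed.

Lemma Icap2_X1 (R : realType) (T1 T2 TY : finType) (p : {ffun T1 * T2 * TY -> R}) :
  is_pmf p -> markov (@rX1 T1 T2 TY) (@rX2 T1 T2 TY) (@rY T1 T2 TY) p ->
  Icap2_set p (MI (@rX1 T1 T2 TY) (@rY T1 T2 TY) p).
Proof.
move=> pp M; exists T1, (marg (fun w => (w.1.1, w)) p); split.
- exact: marg_pmf.
- by rewrite marg_comp marg_id.
- by apply/markov_comp; apply: (@markov_fun _ _ _ _ _ _ _ _ _ id).
- by apply/markov_comp; exact: M.
- by rewrite MI_comp.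
Qed.

Lemma swap_sub (R : realType) (T1 T2 TY : finType) (p : {ffun T1 * T2 * TY -> R}) :
  Icap2_set p `<=` Icap2_set (swap12 p).
Proof.
move=> v [TQ [q [qp mq M1 M2 ->]]].
exists TQ, (marg (fun w => (w.1, (w.2.1.2, w.2.1.1, w.2.2))) q); split.
- exact: marg_pmf.
- by rewrite marg_comp /swap12 -mq marg_comp.
- by apply/markov_comp; exact: M2.
- by apply/markov_comp; exact: M1.
- by rewrite MI_comp.
Qed.

Lemma swap12K (R : realType) (T1 T2 TY : finType) (p : {ffun T1 * T2 * TY -> R}) :
  swap12 (swap12 p) = p.
Proof.
rewrite /swap12 marg_comp /=.
rewrite -[RHS]marg_id; congr marg; apply: funext => -[[a b] c] //.
Qed.

Lemma Icap2_swap (R : realType) (T1 T2 TY : finType) (p : {ffun T1 * T2 * TY -> R}) :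
  Icap2 p = Icap2 (swap12 p).
Proof.
rewrite /Icap2; congr sup; apply/seteqP; split; first exact: swap_sub.
by have := @swap_sub _ _ _ _ (swap12 p); rewrite swap12K.
Qed.

Lemma CMI_cond (R : realType) (T1 T2 TY : finType) (p : {ffun T1 * T2 * TY -> R}) :
  is_pmf p -> condH (@rX1 T1 T2 TY) (@rX2 T1 T2 TY) p = 0 ->
  markov (@rX1 T1 T2 TY) (@rX2 T1 T2 TY) (@rY T1 T2 TY) p.
Proof.
move=> pp H; apply: CMI_eq0_markov => //.
have h1 := CMI_ge0 (@rX1 T1 T2 TY) (@rX2 T1 T2 TY) (@rY T1 T2 TY) pp.
have h2 := @Hrv_mono _ _ _ _ (fun x => (@rX2 T1 T2 TY x, @rY T1 T2 TY x))
   (fun x => (@rX1 T1 T2 TY x, @rX2 T1 T2 TY x, @rY T1 T2 TY x)) p (proj1 pp).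
have h3 : Hrv (fun x => (rX2 x, rY x)) p <=
       Hrv (fun x => (@rX1 T1 T2 TY x, @rX2 T1 T2 TY x, @rY T1 T2 TY x)) p.
  by apply: h2 => x y [_ -> ->].
move: H h1 h3; rewrite /condH /CMI; lra.
Qed.

Lemma CMI_MI (R : realType) (T1 T2 TY : finType) (p : {ffun T1 * T2 * TY -> R}) :
  is_pmf p -> MI (@rX12 T1 T2 TY) (@rY T1 T2 TY) p = MI (@rX2 T1 T2 TY) (@rY T1 T2 TY) p ->
  markov (@rX1 T1 T2 TY) (@rX2 T1 T2 TY) (@rY T1 T2 TY) p.
Proof.
move=> pp H; apply: CMI_eq0_markov => //.
move: H; rewrite /MI /CMI.
rewrite (@Hrv_eq _ _ _ _ (@rX12 T1 T2 TY) (fun x => (@rX1 T1 T2 TY x, @rX2 T1 T2 TY x))); last first.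
  by move=> [[a b] c] [[a' b'] c']; rewrite /rX12 /rX1 /rX2 /=; split => [[-> ->]|[-> ->]].
rewrite (@Hrv_eq _ _ _ _ (fun x => (@rX12 T1 T2 TY x, @rY T1 T2 TY x))
   (fun x => (@rX1 T1 T2 TY x, @rX2 T1 T2 TY x, @rY T1 T2 TY x))); last first.
  by move=> [[a b] c] [[a1 b1] c1]; rewrite /rX12 /rX1 /rX2 /rY /=.
lra.
Qed.


Definition p0 (R : realType) : {ffun bool * bool -> R} :=
  [ffun w : bool * bool => if w.1 == w.2 then 3^-1 else 6^-1].

Lemma sum_bb (R : realType) (F : bool * bool -> R) :
  \sum_y F y = F (true, true) + F (true, false) + (F (false, true) + F (false, false)).
Proof.
rewrite (eq_bigr (fun y => F (y.1, y.2))); last by case.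
by rewrite -(pair_bigA _ (fun a b => F (a, b))) /= !big_bool /=.
Qed.

Lemma p0_pmf (R : realType) : is_pmf (p0 R).
Proof.
split; first by move=> [a b]; rewrite ffunE; case: ifP => _; rewrite invr_ge0 ler0n.
rewrite sum_bb !ffunE /=; lra.
Qed.

Lemma marg_bb (R : realType) (U : finType) (f : bool * bool -> U) (p : {ffun bool * bool -> R}) u :
  marg f p u = p (true, true) * (f (true, true) == u)%:R + p (true, false) * (f (true, false) == u)%:R
   + (p (false, true) * (f (false, true) == u)%:R + p (false, false) * (f (false, false) == u)%:R).
Proof. by rewrite ffunE (sum_ind (fun y => f y == u)) sum_bb. Qed.

Lemma MI_p0 (R : realType) : 0 < MI fst snd (p0 R).
Proof.
have e1 : forall a, marg fst (p0 R) a = 2^-1.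
  by case; rewrite marg_bb !ffunE /=; lra.
have e2 : forall a, marg snd (p0 R) a = 2^-1.
  by case; rewrite marg_bb !ffunE /=; lra.
have e3 : forall y, marg (fun x => (x.1, x.2)) (p0 R) y = if y.1 == y.2 then 3^-1 else 6^-1.
  by case=> [[] []]; rewrite marg_bb !ffunE /=; lra.
have l2 : ln (2^-1 : R) = - ln 2 by rewrite lnV ?posrE.
have l3 : ln (3^-1 : R) = - ln 3 by rewrite lnV ?posrE.
have l6 : ln (6^-1 : R) = - (ln 2 + ln 3).
  rewrite lnV ?posrE // (_ : 6 = 2 * 3 :> R); last by lra.
  by rewrite lnM ?posrE.
have h : 3 * ln (3 : R) < 5 * ln 2.
  rewrite !mulr_natl -!lnXn //; rewrite ltr_ln ?posrE ?exprn_gt0 //.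
  by rewrite -!natrX ltr_nat.
rewrite /MI /Hrv /entropy !big_bool sum_bb !e1 !e2 !e3 /=.
rewrite l2 l3 l6; lra.
Qed.


Ltac injtac := let e := fresh "e" in move=> -[? ?] [? ?] /=; split; intro e; injection e; intros; subst; reflexivity.

Lemma SI2_copy (R : realType) (T1 T2 : finType) (p : {ffun T1 * T2 -> R}) :
  SI2 (copyY p) = Icap2 (copyY p) - MI fst snd p.
Proof.
have e1 : Hrv (fun x : T1 * T2 => (x.1, x.2)) p = Hrv (fun x => x) p.
  by apply: Hrv_eq; injtac.
have e2 : Hrv (fun x : T1 * T2 => ((x.1, x.2), x)) p = Hrv (fun x => x) p.
  by apply: Hrv_eq; injtac.
have e3 : Hrv (fun x : T1 * T2 => (x.1, x)) p = Hrv (fun x => x) p.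
  by apply: Hrv_eq; injtac.
have e4 : Hrv (fun x : T1 * T2 => (x.2, x)) p = Hrv (fun x => x) p.
  by apply: Hrv_eq; injtac.
have e5 : Hrv (fun x : T1 * T2 => x.1) p = Hrv fst p by [].
have e6 : Hrv (fun x : T1 * T2 => x.2) p = Hrv snd p by [].
rewrite /SI2 /copyY !MI_comp /MI /rX12 /rX1 /rX2 /rY /= e1 e2 e3 e4 e5 e6.
lra.
Qed.


Lemma MI_indep (R : realType) (T A B : finType) (f : T -> A) (g : T -> B) (q : {ffun T -> R}) :
  (forall x, 0 <= q x) ->
  (forall a b, marg (fun x => (f x, g x)) q (a, b) = marg f q a * marg g q b) ->
  MI f g q = 0.
Proof.
move=> q0 I; rewrite /MI !Hrv_sample.
have -> : \sum_x q x * ln (marg (fun x => (f x, g x)) q (f x, g x)) =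
  \sum_x (q x * ln (marg f q (f x)) + q x * ln (marg g q (g x))).
  apply: eq_bigr => x _.
  2: by rewrite big_split /=; ring. have [e|ne] := eqVneq (q x) 0; first by rewrite e !mul0r addr0.
have qx : 0 < q x by rewrite lt_def ne q0.
rewrite I lnM ?mulrDr // posrE.
- exact: (marg_pos f q0 qx).
- exact: (marg_pos g q0 qx).
Qed.


Lemma copy_supp (R : realType) (TQ : finType) (q : {ffun TQ * (bool * bool * (bool * bool)) -> R}) :
  is_pmf q -> marg snd q = copyY (p0 R) ->
  forall t x y, y != x -> q (t, (x, y)) = 0.
Proof.
move=> [q0 _] mq t x y ne.
apply/eqP; rewrite eq_le q0 andbT.
have := @marg_ge _ _ _ snd q (t, (x, y)) q0; rewrite mq /copyY ffunE /=.
rewrite big_pred0 // => z; apply/negP => /eqP e.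
by move: e ne; case: z => a b [<- <-]; rewrite eqxx.
Qed.

Lemma copy_G (R : realType) (TQ : finType) (q : {ffun TQ * (bool * bool * (bool * bool)) -> R})
  (pi : bool * bool -> bool) :
  is_pmf q -> marg snd q = copyY (p0 R) ->
  forall t a y, marg (fun w => (w.1, pi w.2.1, w.2.2)) q (t, a, y) =
    if pi y == a then marg (fun w => (w.1, w.2.2)) q (t, y) else 0.
Proof.
move=> qp mq t a y; have S := copy_supp qp mq.
rewrite !ffunE (sum_ind (fun w => (w.1, pi w.2.1, w.2.2) == (t, a, y))).
case: ifP => ha.
  rewrite (sum_ind (fun w => (w.1, w.2.2) == (t, y))).
  apply: eq_bigr => -[t' [x y']] _ /=.
  have [e|ne] := eqVneq y' x; last by rewrite S // !mul0r.
  subst y'; rewrite !xpair_eqE.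
  case: (eqVneq x y) => [->|nxy]; first by rewrite ha !andbT.
  by rewrite !andbF.
rewrite big1 // => -[t' [x y']] _ /=.
have [e|ne] := eqVneq y' x; last by rewrite S // mul0r.
subst y'; rewrite !xpair_eqE.
case: (eqVneq x y) => [exy|]; last by rewrite !andbF mulr0.
by rewrite exy ha andbF andFb mulr0.
Qed.

Lemma copy_marg1 (R : realType) (TQ : finType) (q : {ffun TQ * (bool * bool * (bool * bool)) -> R})
  (pi : bool * bool -> bool) :
  marg snd q = copyY (p0 R) -> marg (fun w => pi w.2.1) q = marg pi (p0 R).
Proof.
move=> mq; have -> : marg (fun w => pi w.2.1) q = marg (fun x => pi x.1) (marg snd q).
  by rewrite marg_comp.
rewrite mq /copyY marg_comp; congr marg; apply: funext => -[b c] //.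
Qed.

Lemma copy_marg2 (R : realType) (TQ : finType) (q : {ffun TQ * (bool * bool * (bool * bool)) -> R})
  (pi : bool * bool -> bool) :
  marg snd q = copyY (p0 R) -> forall y, marg (fun w => (pi w.2.1, w.2.2)) q (pi y, y) = p0 R y.
Proof.
move=> mq y; have -> : marg (fun w => (pi w.2.1, w.2.2)) q =
   marg (fun x => (pi x.1, x.2)) (marg snd q) by rewrite marg_comp.
rewrite mq /copyY marg_comp ffunE.
rewrite (eq_bigl (fun x => x == y)) ?big_pred1_eq // => -[b c] /=.
rewrite xpair_eqE; apply/andP/eqP => [[_ /eqP //]|<-]; by rewrite !eqxx.
Qed.

Lemma copy_margY (R : realType) (TQ : finType) (q : {ffun TQ * (bool * bool * (bool * bool)) -> R}) :
  marg snd q = copyY (p0 R) -> marg (fun w => w.2.2) q = p0 R.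
Proof.
move=> mq; have -> : marg (fun w => w.2.2) q = marg snd (marg snd q) by rewrite marg_comp.
by rewrite mq /copyY marg_comp marg_id.
Qed.

Lemma p0_m1 (R : realType) a : marg fst (p0 R) a = 2^-1.
Proof. by case: a; rewrite marg_bb !ffunE /=; lra. Qed.
Lemma p0_m2 (R : realType) a : marg snd (p0 R) a = 2^-1.
Proof. by case: a; rewrite marg_bb !ffunE /=; lra. Qed.

Lemma copy_indep (R : realType) (TQ : finType) (q : {ffun TQ * (bool * bool * (bool * bool)) -> R}) :
  is_pmf q -> marg snd q = copyY (p0 R) ->
  markov fst (fun w => w.2.1.1) (fun w => w.2.2) q ->
  markov fst (fun w => w.2.1.2) (fun w => w.2.2) q ->
  MI fst (fun w => w.2.2) q = 0.
Proof.
move=> qp mq M1 M2; apply: MI_indep; first by case: qp.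
move=> t y.
have G1 := copy_G fst qp mq t.
have G2 := copy_G snd qp mq t.
have E1 : forall a b, marg (fun w => (w.1, w.2.2)) q (t, (a, b)) * 2^-1 =
   (\sum_y (if y.1 == a then marg (fun w => (w.1, w.2.2)) q (t, y) else 0)) * p0 R (a, b).
  move=> a b; have := M1 t a (a, b).
  rewrite G1 /= eqxx (copy_marg1 fst mq) p0_m1 (copy_marg2 fst mq (a, b)).
  rewrite -(marg_sum2 (fun w => (w.1, w.2.1.1)) (fun w => w.2.2)) /= => ->.
  by congr (_ * _); apply: eq_bigr => y' _; rewrite G1.
have E2 : forall a b, marg (fun w => (w.1, w.2.2)) q (t, (a, b)) * 2^-1 =
   (\sum_y (if y.2 == b then marg (fun w => (w.1, w.2.2)) q (t, y) else 0)) * p0 R (a, b).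
  move=> a b; have := M2 t b (a, b).
  rewrite G2 /= eqxx (copy_marg1 snd mq) p0_m2 (copy_marg2 snd mq (a, b)).
  rewrite -(marg_sum2 (fun w => (w.1, w.2.1.2)) (fun w => w.2.2)) /= => ->.
  by congr (_ * _); apply: eq_bigr => y' _; rewrite G2.
rewrite (copy_margY mq) -(marg_sum2 fst (fun w => w.2.2)) /=.
have := E1 true true; have := E1 true false; have := E1 false true; have := E1 false false.
have := E2 true true; have := E2 true false; have := E2 false true; have := E2 false false.
rewrite !sum_bb !ffunE /=.
case: y => [[] []] /=; lra.
Qed.


Lemma Icap2_copy_le0 (R : realType) : Icap2 (copyY (p0 R)) <= 0.
Proof.
apply: ge_sup; first by exists 0; apply: Icap2_0; apply: marg_pmf; exact: p0_pmf.
by move=> v [TQ [q [qp mq M1 M2 ->]]]; rewrite (copy_indep qp mq M1 M2).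
Qed.

Unset Implicit Arguments.
Local Close Scope classical_set_scope.

Theorem proposition1 (R : realType) :
  (forall (T1 T2 TY : finType) (p : {ffun T1 * T2 * TY -> R}), is_pmf p ->
     [/\ (* (GP) *) 0 <= Icap2 p,
         (* (S) *) Icap2 p = Icap2 (swap12 p),
         (* (M) *) Icap2 p <= Icap1 (law1Y p) /\
            (condH (@rX1 T1 T2 TY) (@rX2 T1 T2 TY) p = 0 -> Icap2 p = Icap1 (law1Y p)) &
         (* (SM) *) Icap2 p <= Icap1 (law1Y p) /\
            (MI (@rX12 T1 T2 TY) (@rY T1 T2 TY) p = MI (@rX2 T1 T2 TY) (@rY T1 T2 TY) p ->
             Icap2 p = Icap1 (law1Y p))]) /\
  (* (I) *)
  (forall (T1 TY : finType) (p : {ffun T1 * TY -> R}), is_pmf p ->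
     Icap1 p = MI fst snd p) /\
  (* not (LP) *)
  (exists (T1 T2 TY : finType) (p : {ffun T1 * T2 * TY -> R}),
     is_pmf p /\ SI2 p < 0) /\
  (* not (Id) *)
  (exists (T1 T2 : finType) (p : {ffun T1 * T2 -> R}),
     is_pmf p /\ Icap2 (copyY p) <> MI fst snd p).
Proof.
split.
  move=> T1 T2 TY p pp.
  have hI : Icap1 (law1Y p) = MI (@rX1 T1 T2 TY) (@rY T1 T2 TY) p.
    rewrite Icap1E; last exact: marg_pmf.
    by rewrite /law1Y MI_comp.
  have le := Icap2_le pp.
  have eqM : markov (@rX1 T1 T2 TY) (@rX2 T1 T2 TY) (@rY T1 T2 TY) p -> Icap2 p = Icap1 (law1Y p).
    move=> M; rewrite hI; apply/eqP; rewrite eq_le le /=; exact: Icap2_ge pp (Icap2_X1 pp M).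
  split.
  - exact: Icap2_ge pp (Icap2_0 pp).
  - exact: Icap2_swap.
  - split; [by rewrite hI | by move=> H; apply: eqM; exact: CMI_cond].
  - split; [by rewrite hI | by move=> H; apply: eqM; exact: CMI_MI].
split; first by move=> T1 TY p pp; exact: Icap1E.
have c0 := Icap2_copy_le0 R; have m0 := MI_p0 R.
split.
  exists bool, bool, (bool * bool)%type, (copyY (p0 R)); split.
    exact: marg_pmf (p0_pmf R).
  rewrite SI2_copy; lra.
exists bool, bool, (p0 R); split; first exact: p0_pmf.
move=> e; lra.
Qed.
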